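(* Let $Z$ be a finite set of algebraic integers, with notation as in the context, and set \[C_Z=\prod_{\sigma:K_Z\to\mathbf{C}}\max_{x\in Z}|\sigma(x)|,\] the product over all field embeddings of $K_Z$ into $\mathbf{C}$. For every $\alpha\in C(Z;\mathbf{Z})$ such that the character $\eta_\alpha$ is non-trivial on $H_Z$, and every $p\in\mathcal{S}_Z$ with $|p|>C_Z\|\alpha\|_1^{[K_Z:\mathbf{Q}]}$, we have $\widehat{\lambda}_Z(\alpha)=\widehat{\mu}_p(\alpha)=0$.
   Context: $e(z)=e^{2i\pi z}$. $Z\subset\mathbf{C}$ finite set of algebraic integers, $K_Z=\mathbf{Q}(Z)$, $\mathbf{O}_Z$ its ring of integers. $\mathcal{S}_Z$: prime ideals $p\subset\mathbf{O}_Z$ of residual degree $1$ such that no two distinct elements of $Z$ have difference in $p$; for such $p$, $|p|=q$ is prime and $\mathbf{O}_Z/p$ is identified with $\mathbf{F}_q$, whose elements are identified with integers in $\{0,\dots,q-1\}$; $\varpi_p$ is reduction mod $p$. $C(Z;X)$ denotes maps $Z\to X$; for $\alpha\in C(Z;\mathbf{Z})$, $\|\alpha\|_1=\sum_{x\in Z}|\alpha(x)|$ and $\eta_\alpha:C(Z;\mathbf{S}^1)\to\mathbf{S}^1$, $\eta_\alpha(f)=\prod_{x\in Z}f(x)^{\alpha(x)}$. $R_Z=\{\alpha\in C(Z;\mathbf{Z})\mid\sum_x\alpha(x)x=0\}$, $H_Z=\{f\in C(Z;\mathbf{S}^1)\mid\eta_\alpha(f)=1\ \forall\alpha\in R_Z\}$,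 $\lambda_Z$ the Haar probability measure on $H_Z$ viewed as a measure on $C(Z;\mathbf{S}^1)$. For $p\in\mathcal{S}_Z$, $U_p(a)\in C(Z;\mathbf{S}^1)$ is $x\mapsto e(a\varpi_p(x)/|p|)$ for $a\in\mathbf{O}_Z/p$, and $\mu_p=\frac1{|p|}\sum_{a\in\mathbf{O}_Z/p}\delta_{U_p(a)}$. For a measure $\nu$ on $C(Z;\mathbf{S}^1)$, $\widehat\nu(\alpha)=\int\eta_\alpha\,d\nu$. *)

(* Defs.v *)
From HB Require Import structures.
From mathcomp Require Import all_boot all_order all_algebra.
From mathcomp Require Import algC algnum.
From mathcomp Require Import complex.
From mathcomp Require Import all_classical all_reals all_analysis.

Set Implicit Arguments.
Unset Strict Implicit.
Unset Printing Implicit Defensive.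

Import Order.TTheory GRing.Theory Num.Theory.
Local Open Scope classical_set_scope.
Local Open Scope ring_scope.

(* Number-theoretic side.  The finite set Z of algebraic integers is   *)
(* given by an injective enumeration z : 'I_n -> algC (algC = the      *)
(* algebraic numbers inside C).                                        *)

Definition is_subfield (S : algC -> Prop) : Prop :=
  [/\ S 0, S 1, (forall x y, S x -> S y -> S (x - y)),
      (forall x y, S x -> S y -> S (x * y)) & (forall x, S x -> S x^-1)].

Definition KZ n (z : 'I_n -> algC) (x : algC) : Prop :=
  forall S, is_subfield S -> (forall i, S (z i)) -> S x.

Definition OZ n (z : 'I_n -> algC) (x : algC) : Prop := KZ z x /\ x \in Aint.

Definition field_degree n (z : 'I_n -> algC) (d : nat) : Prop :=
  exists b : 'I_d -> algC,
    [/\ forall i, KZ z (b i),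
        forall x, KZ z x -> exists c : 'I_d -> rat, x = \sum_i ratr (c i) * b i
      & forall c : 'I_d -> rat, \sum_i ratr (c i) * b i = 0 -> forall i, c i = 0].

(* s is a field embedding K_Z -> C (only its values on K_Z matter) *)
Definition is_embedding n (z : 'I_n -> algC) (s : algC -> algC) : Prop :=
  s 1 = 1 /\
  forall x y, KZ z x -> KZ z y -> s (x + y) = s x + s y /\ s (x * y) = s x * s y.

Definition enumerates_embeddings n (z : 'I_n -> algC) m
    (emb : 'I_m -> algC -> algC) : Prop :=
  [/\ forall j, is_embedding z (emb j),
      forall j k, (forall x, KZ z x -> emb j x = emb k x) -> j = k
    & forall s, is_embedding z s ->
        exists j, forall x, KZ z x -> s x = emb j x].

Definition CZ n (z : 'I_n -> algC) m (emb : 'I_m -> algC -> algC) : algC :=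
  \prod_(j < m) \big[Num.max/0]_(i < n) `|emb j (z i)|.

Definition is_prime_ideal n (z : 'I_n -> algC) (p : algC -> Prop) : Prop :=
  (forall x, p x -> OZ z x) /\
  [/\ p 0,
      forall x y, p x -> p y -> p (x + y),
      forall a x, OZ z a -> p x -> p (a * x),
      ~ p 1
    & forall a b, OZ z a -> OZ z b -> p (a * b) -> p a \/ p b].

(* p has residual degree 1 and |p| = q: q is prime, q lies in p and every
   element of O_Z is congruent mod p to a rational integer, i.e.
   O_Z/p = F_q. *)
Definition residual_degree_one n (z : 'I_n -> algC) (p : algC -> Prop)
    (q : nat) : Prop :=
  [/\ prime q, p q%:R & forall x, OZ z x -> exists k : nat, p (x - k%:R)].

Definition in_SZ n (z : 'I_n -> algC) (p : algC -> Prop) (q : nat) : Prop :=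
  [/\ is_prime_ideal z p, residual_degree_one z p q
    & forall i j, i != j -> ~ p (z i - z j)].

(* w = reduction mod p restricted to Z, with F_q identified with
   {0,...,q-1} *)
Definition is_reduction n (z : 'I_n -> algC) (p : algC -> Prop) (q : nat)
    (w : 'I_n -> nat) : Prop :=
  forall i, (w i < q)%N /\ p (z i - (w i)%:R).

Definition norm1 n (a : 'I_n -> int) : nat := (\sum_i `|a i|)%N.

Definition expi2pi (R : realType) (t : R) : R[i] :=
  Complex (cos (2 * pi * t)) (sin (2 * pi * t)).

Definition eta_char (R : realType) n (a : 'I_n -> int) (f : 'I_n -> R[i]) : R[i] :=
  \prod_i f i ^ a i.

Definition RZ n (z : 'I_n -> algC) (b : 'I_n -> int) : Prop :=
  \sum_i (b i)%:~R * z i = 0.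

Definition HZ (R : realType) n (z : 'I_n -> algC) (f : 'I_n -> R[i]) : Prop :=
  (forall i, `|f i| = 1) /\ (forall b, RZ z b -> eta_char b f = 1).

Definition Up (R : realType) n (q : nat) (w : 'I_n -> nat) (a : nat)
    : 'I_n -> R[i] :=
  fun i => expi2pi ((a * w i)%:R / q%:R : R).

(* Fourier coefficient of mu_p = (1/q) sum_a delta_{U_p(a)} *)
Definition mu_hat (R : realType) n (q : nat) (w : 'I_n -> nat)
    (a : 'I_n -> int) : R[i] :=
  (q%:R)^-1 * \sum_(b < q) eta_char a (Up R q w b).

(* Angle coordinates: t in [0,1)^n  <->  (e(t_x))_x in C(Z;S^1).  A
   (Borel) probability measure on C(Z;S^1) is represented by a
   probability measure on R^n (product Borel sigma-algebra on tuples)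
   concentrated on [0,1)^n. *)
Definition angles (R : realType) n (t : n.-tuple R) : 'I_n -> R[i] :=
  fun i => expi2pi (tnth t i).

Definition cube (R : realType) n : set (n.-tuple R) :=
  [set t | forall i, 0 <= tnth t i < 1].

Definition fracR (R : realType) (x : R) : R := x - (Num.floor x)%:~R.

(* translation on the torus by angles(phi), in angle coordinates *)
Definition shift (R : realType) n (phi t : n.-tuple R) : n.-tuple R :=
  [tuple fracR (tnth t i + tnth phi i) | i < n].

(* lam is (the angle-coordinate representation of) the Haar probability
   measure lambda_Z on H_Z, viewed as a measure on C(Z;S^1): it is
   carried by H_Z and invariant under translation by every element of
   H_Z.  (The Haar probability measure exists and is unique.) *)
Definition is_Haar_HZ (R : realType) n (z : 'I_n -> algC)
    (lam : probability (n.-tuple R) R) : Prop :=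
  lam (@cube R n `&` (angles (R:=R) (n:=n)) @^-1` HZ z) = 1%E /\
  forall phi, @cube R n phi -> HZ z (angles phi) ->
    forall A, measurable A -> lam (shift phi @^-1` A) = lam A.

Definition lambda_hat (R : realType) n (lam : probability (n.-tuple R) R)
    (a : 'I_n -> int) : R[i] :=
  Complex (Rintegral lam setT (fun t => @complex.Re R (eta_char a (angles t))))
          (Rintegral lam setT (fun t => @complex.Im R (eta_char a (angles t)))).

(* Main.v *)
Require Import Defs.
From HB Require Import structures.
From mathcomp Require Import all_boot all_order all_algebra.
From mathcomp Require Import algC algnum.
From mathcomp Require Import all_field.
From mathcomp Require Import complex.
From mathcomp Require Import all_classical all_reals all_analysis.
From mathcomp Require Import measurable_realfun.
From mathcomp Require Import ring lra.

Import Order.TTheory GRing.Theory Num.Theory.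
Local Open Scope classical_set_scope.
Local Open Scope ring_scope.

Module NTm.
Set Implicit Arguments.
Unset Strict Implicit.
Unset Printing Implicit Defensive.

Section Sub.
Variable S : algC -> Prop.
Hypothesis hS : is_subfield S.

Lemma sf0 : S 0. Proof. by case: hS. Qed.
Lemma sf1 : S 1. Proof. by case: hS. Qed.
Lemma sfB x y : S x -> S y -> S (x - y). Proof. by case: hS => _ _ h _ _; apply: h. Qed.
Lemma sfM x y : S x -> S y -> S (x * y). Proof. by case: hS => _ _ _ h _; apply: h. Qed.
Lemma sfV x : S x -> S x^-1. Proof. by case: hS => _ _ _ _ h; apply: h. Qed.
Lemma sfN x : S x -> S (- x).
Proof. by move=> Sx; rewrite -sub0r; apply: sfB => //; apply: sf0. Qed.
Lemma sfD x y : S x -> S y -> S (x + y).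
Proof. by move=> Sx Sy; rewrite -[y]opprK; apply: sfB => //; apply: sfN. Qed.
Lemma sf_nat k : S k%:R.
Proof. elim: k => [|k IH]; first exact: sf0. by rewrite -addn1 natrD; apply: sfD => //; apply: sf1. Qed.
Lemma sf_int (k : int) : S k%:~R.
Proof. case: k => k; first exact: sf_nat. by rewrite NegzE mulrNz; apply: sfN; apply: sf_nat. Qed.
Lemma sf_rat (a : rat) : S (ratr a).
Proof. by rewrite /ratr; apply: sfM; [apply: sf_int | apply: sfV; apply: sf_int]. Qed.
Lemma sf_sum I (r : seq I) (P : pred I) F : (forall i, P i -> S (F i)) -> S (\sum_(i <- r | P i) F i).
Proof. move=> h; apply: (big_ind S) => //; [exact: sf0 | exact: sfD]. Qed.
Lemma sf_prod I (r : seq I) (P : pred I) F : (forall i, P i -> S (F i)) -> S (\prod_(i <- r | P i) F i).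
Proof. move=> h; apply: (big_ind S) => //; [exact: sf1 | exact: sfM]. Qed.
Lemma sfX x k : S x -> S (x ^+ k).
Proof. by move=> Sx; elim: k => [|k IH]; [rewrite expr0; apply: sf1 | rewrite exprS; apply: sfM]. Qed.
End Sub.

Lemma KZ_sf n (z : 'I_n -> algC) : is_subfield (KZ z).
Proof.
split.
- by move=> S hS _; apply: sf0.
- by move=> S hS _; apply: sf1.
- by move=> x y hx hy S hS hz; apply: sfB => //; [apply: hx | apply: hy].
- by move=> x y hx hy S hS hz; apply: sfM => //; [apply: hx | apply: hy].
- by move=> x hx S hS hz; apply: sfV => //; apply: hx.
Qed.

Lemma KZ_z n (z : 'I_n -> algC) i : KZ z (z i).
Proof. by move=> S _ h. Qed.


Section Emb.
Variables (n : nat) (z : 'I_n -> algC) (s : algC -> algC).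
Hypothesis es : is_embedding z s.
Let K := KZ z.
Let hK : is_subfield K := KZ_sf z.

Lemma e1 : s 1 = 1. Proof. by case: es. Qed.
Lemma eD x y : K x -> K y -> s (x + y) = s x + s y.
Proof. by case: es => _ h Kx Ky; case: (h x y Kx Ky). Qed.
Lemma eM x y : K x -> K y -> s (x * y) = s x * s y.
Proof. by case: es => _ h Kx Ky; case: (h x y Kx Ky). Qed.
Lemma e0 : s 0 = 0.
Proof.
have K0 : K 0 := sf0 hK.
have h : s 0 + s 0 = s 0 + 0 by rewrite addr0 -eD // addr0.
exact: addrI h.
Qed.
Lemma eN x : K x -> s (- x) = - s x.
Proof.
move=> Kx; have KNx : K (- x) by apply: (sfN hK).
have h : s x + s (- x) = s x + - s x by rewrite -(eD Kx KNx) !subrr e0.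
exact: addrI h.
Qed.
Lemma eB x y : K x -> K y -> s (x - y) = s x - s y.
Proof. by move=> Kx Ky; rewrite eD ?eN //; apply: (sfN hK). Qed.
Lemma e_nat k : s k%:R = k%:R.
Proof.
elim: k => [|k IH]; first exact: e0.
by rewrite -addn1 !natrD eD ?IH ?e1 //; [apply: (sf_nat hK) | apply: (sf1 hK)].
Qed.
Lemma e_int (k : int) : s k%:~R = k%:~R.
Proof. case: k => k; first exact: e_nat. by rewrite NegzE !mulrNz eN ?e_nat //; apply: (sf_nat hK). Qed.
Lemma eV x : K x -> s x^-1 = (s x)^-1.
Proof.
move=> Kx; have [->|nz] := eqVneq x 0; first by rewrite invr0 e0 invr0.
have := eM Kx (sfV hK Kx); rewrite mulfV // e1 => h.
have nzs : s x != 0 by apply/eqP => h0; move: h; rewrite h0 mul0r => /eqP; rewrite oner_eq0.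
by apply: (mulfI nzs); rewrite -h mulfV.
Qed.
Lemma e_neq0 x : K x -> x != 0 -> s x != 0.
Proof.
move=> Kx nz; apply/eqP => h0; have := eM Kx (sfV hK Kx).
by rewrite mulfV // e1 h0 mul0r => /eqP; rewrite oner_eq0.
Qed.
Lemma e_rat a : s (ratr a) = ratr a.
Proof.
have Kn := sf_int hK (numq a); have Kd := sf_int hK (denq a).
by rewrite /ratr eM ?eV ?e_int //; apply: (sfV hK).
Qed.
Lemma e_sum I (r : seq I) (P : pred I) F : (forall i, K (F i)) ->
  s (\sum_(i <- r | P i) F i) = \sum_(i <- r | P i) s (F i).
Proof.
move=> h; elim: r => [|a r IH]; first by rewrite !big_nil e0.
rewrite !big_cons; case: (P a) => //; rewrite eD ?IH //; exact: (sf_sum hK).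
Qed.
Lemma e_prod I (r : seq I) (P : pred I) F : (forall i, K (F i)) ->
  s (\prod_(i <- r | P i) F i) = \prod_(i <- r | P i) s (F i).
Proof.
move=> h; elim: r => [|a r IH]; first by rewrite !big_nil e1.
rewrite !big_cons; case: (P a) => //; rewrite eM ?IH //; exact: (sf_prod hK).
Qed.
Lemma eX x k : K x -> s (x ^+ k) = s x ^+ k.
Proof.
move=> Kx; elim: k => [|k IH]; first by rewrite !expr0 e1.
by rewrite !exprS eM ?IH //; apply: (sfX hK).
Qed.
Lemma e_horner (P : {poly rat}) x : K x ->
  s (map_poly ratr P).[x] = (map_poly ratr P).[s x].
Proof.
move=> Kx; rewrite !horner_coef e_sum => [|i]; last first.
  by apply: (sfM hK); [rewrite coef_map; apply: (sf_rat hK) | apply: (sfX hK)].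
apply: eq_bigr => i _; rewrite eM ?eX ?coef_map ?e_rat //; last exact: (sfX hK).
exact: (sf_rat hK).
Qed.
End Emb.

Lemma emb_ext n (z : 'I_n -> algC) s t : is_embedding z s -> is_embedding z t ->
  (forall i, s (z i) = t (z i)) -> forall x, KZ z x -> s x = t x.
Proof.
move=> es et h x Kx.
have hK := KZ_sf z.
pose S y := KZ z y /\ s y = t y.
have: is_subfield S.
  split.
  - by split; [apply: (sf0 hK) | rewrite (e0 es) (e0 et)].
  - by split; [apply: (sf1 hK) | rewrite (e1 es) (e1 et)].
  - by move=> u v [Ku hu] [Kv hv]; split; [apply: (sfB hK) | rewrite (eB es) // (eB et) // hu hv].
  - by move=> u v [Ku hu] [Kv hv]; split; [apply: (sfM hK) | rewrite (eM es) // (eM et) // hu hv].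
  - by move=> u [Ku hu]; split; [apply: (sfV hK) | rewrite (eV es) // (eV et) // hu].
by move=> /(Kx S) -/(_ _)[] // i; split; [apply: KZ_z | apply: h].
Qed.


Lemma small_poly_exists n (z : 'I_n -> algC) d g : field_degree z d -> KZ z g ->
  exists Q : {poly rat}, [/\ Q != 0, (size Q <= d.+1)%N & root (map_poly ratr Q) g].
Proof.
move=> [b [Kb span _]] Kg.
have hK := KZ_sf z.
have /fin_all_exists[c hc] : forall i : 'I_d.+1, exists c : 'I_d -> rat,
    g ^+ i = \sum_j ratr (c j) * b j.
  by move=> i; apply: span; apply: (sfX hK).
pose C : 'M[rat]_(d.+1, d) := \matrix_(i, j) c i j.
have rk : (0 < \rank (kermx C))%N.
  by rewrite mxrank_ker subn_gt0 (leq_ltn_trans (rank_leq_col C)).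
have [i0 nzu] : exists i0, row i0 (kermx C) != 0.
  apply/existsP; apply: contraTT rk; rewrite negb_exists => /forallP h.
  suff -> : kermx C = 0 by rewrite mxrank0.
  by apply/row_matrixP => i; rewrite row0; apply/eqP; move: (h i); rewrite negbK.
set u := row i0 (kermx C) in nzu.
have uC : u *m C = 0 by apply/sub_kermxP; apply: row_sub.
exists (\poly_(i < d.+1) u 0 (inord i)); split.
- apply: contraNneq nzu => h; apply/eqP/rowP => i; rewrite mxE.
  have := congr1 (fun p : {poly rat} => p`_i) h; rewrite coef_poly ltn_ord coef0 inord_val.
  move=> h0; transitivity (u 0 i); first by rewrite /u !mxE.
  by rewrite h0 mxE.
- exact: size_poly.
have -> : map_poly ratr (\poly_(i < d.+1) u 0 (inord i)) = \poly_(i < d.+1) (ratr (u 0 (inord i)) : algC).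
  apply/polyP => k; rewrite coef_map !coef_poly; case: ifP => _ //; exact: rmorph0.
rewrite /root horner_poly; apply/eqP.
under eq_bigr => i _ do rewrite inord_val.
under eq_bigr => i _ do rewrite (hc i) mulr_sumr.
rewrite exchange_big /= big1 // => j _.
under eq_bigr => i _ do rewrite mulrA.
rewrite -big_distrl /=.
suff -> : \sum_(i < d.+1) (ratr (u 0 i) * ratr (c i j) : algC) = ratr ((u *m C) 0 j).
  by rewrite uC mxE rmorph0 mul0r.
by rewrite mxE rmorph_sum; apply: eq_bigr => i _; rewrite !mxE rmorphM.
Qed.

Lemma emb_card n (z : 'I_n -> algC) d m (emb : 'I_m -> algC -> algC) :
  field_degree z d -> enumerates_embeddings z emb -> (m <= d)%N.
Proof.
move=> fd [eE einj _].
have hK := KZ_sf z.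
pose sz := [seq z i | i <- enum 'I_n].
have [g [a Dg] [ps Dps]] := algC_PET sz.
have Kg : KZ z g.
  rewrite Dg; apply: (sf_sum hK) => i _; rewrite -mulr_natr; apply: (sfM hK); last exact: (sf_nat hK).
  have : sz`_i \in sz by apply: mem_nth.
  by case/mapP => j _ ->; apply: KZ_z.
have zP i : exists P : {poly rat}, z i = (map_poly ratr P).[g].
  have : z i \in sz by apply: map_f; rewrite mem_enum.
  by rewrite Dps => /mapP[P _ ->]; exists P.
have inj : injective (fun j => emb j g).
  move=> j k /= hjk; apply: einj; apply: emb_ext => // i.
  have [P ->] := zP i; rewrite (e_horner (eE j)) // (e_horner (eE k)) //.
  by rewrite hjk.
have [p [Dp monp] dvp] := minCpolyP g.
have nzp : map_poly ratr p != 0 :> {poly algC}.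
  by rewrite map_poly_eq0 monic_neq0.
have rts : all (root (map_poly ratr p)) [seq emb j g | j <- enum 'I_m].
  apply/allP => x /mapP[j _ ->]; rewrite /root -(e_horner (eE j)) //.
  have : root (map_poly ratr p) g by rewrite dvp dvdpp.
  by rewrite /root => /eqP ->; rewrite (e0 (eE j)).
have := max_poly_roots nzp rts.
rewrite map_inj_uniq ?enum_uniq // => /(_ isT).
rewrite size_map size_enum_ord size_map_poly => hm.
have [Q [nzQ szQ rQ]] := small_poly_exists fd Kg.
have : (p %| Q)%R by rewrite -dvp.
move=> /(dvdp_leq nzQ) h.
by rewrite -ltnS (leq_trans hm (leq_trans h szQ)).
Qed.

Section NT4.
Local Open Scope group_scope.
Local Open Scope ring_scope.

Lemma aut_fixed_rat (x : algC) :
  (forall nu : {rmorphism algC -> algC}, nu x = x) -> x \in Crat.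
Proof.
move=> fix_x.
have [p [Dp monp] dvp] := minCpolyP x.
have [rs Drs] := closed_field_poly_normal (map_poly ratr p : {poly algC}).
have lc1 : lead_coef (map_poly ratr p : {poly algC}) = 1.
  by rewrite lead_coef_map (monicP monp) rmorph1.
rewrite lc1 scale1r in Drs.
have [Qn [QnC [s1 Ds1 gen]]] := num_field_exists rs.
pose P := map_poly (in_alg Qn) p.
have QnCP : map_poly QnC P = map_poly ratr p.
  rewrite -map_poly_comp; apply: eq_map_poly => a /=.
  by rewrite alg_num_field fmorph_rat.
have PP : P \is a polyOver 1%VS by apply: alg_polyOver.
have splitP : splittingFieldFor 1 P {:Qn}.
  exists s1 => //.
  have -> : P = \prod_(y <- s1) ('X - y%:P).
    apply: (@map_inj_poly _ _ QnC (fmorph_inj QnC) (rmorph0 _)).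
    by rewrite QnCP map_prod_XsubC Drs -Ds1 big_map.
  exact: eqpxx.
have Qn_ax : FieldExt_isSplittingField _ Qn by constructor; exists P.
pose L : splittingFieldType rat := HB.pack_for (splittingFieldType rat) Qn Qn_ax.
have galL : galois (1%VS : {vspace L}) {:L}.
  apply/and3P; split; first exact: sub1v.
    apply/separableP => y _; apply: pcharf0_separable.
    by move=> k; rewrite pchar_lalg pchar_num.
  exact: normalFieldf.
have xrs : x \in rs.
  rewrite -root_prod_XsubC -Drs dvp; exact: dvdpp.
move: xrs; rewrite -Ds1 => /mapP[x1 _ Dx1].
have : (x1 : L) \in fixedField 'Gal({:L} / 1).
  apply/fixedFieldP; first exact: memvf.
  move=> g _.
  have [nu Dnu] := extend_algC_subfield_aut (QnC : {rmorphism L -> algC}) g.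
  apply: (fmorph_inj (QnC : {rmorphism L -> algC})).
  by rewrite Dnu -Dx1 fix_x.
rewrite (galois_fixedField galL) => /vlineP[k Dk].
by rewrite Dx1 Dk /= rmorphZ_num rmorph1 mulr1 Crat_rat.
Qed.

End NT4.

Lemma emb_Aint n (z : 'I_n -> algC) s x : is_embedding z s -> KZ z x -> x \in Aint -> s x \in Aint.
Proof.
move=> es Kx Ax.
have [p [Dp monp] dvp] := minCpolyP x.
apply: (@root_monic_Aint (minCpoly x)) => //; last by rewrite Dp monic_map.
rewrite Dp /root -(e_horner es) //.
have : root (map_poly ratr p) x by rewrite dvp dvdpp.
by rewrite /root => /eqP ->; rewrite (e0 es).
Qed.

Lemma OZ_int n (z : 'I_n -> algC) (k : int) : OZ z k%:~R.
Proof. split; [exact: (sf_int (KZ_sf z)) | exact: Aint_int]. Qed.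

Section Ideal.
Variables (n : nat) (z : 'I_n -> algC) (p : algC -> Prop).
Hypothesis hp : is_prime_ideal z p.
Lemma pOZ x : p x -> OZ z x. Proof. by case: hp => h _; apply: h. Qed.
Lemma p0 : p 0. Proof. by case: hp => _ []. Qed.
Lemma pD x y : p x -> p y -> p (x + y). Proof. by case: hp => _ [] _ h _ _ _; apply: h. Qed.
Lemma pM a x : OZ z a -> p x -> p (a * x). Proof. by case: hp => _ [] _ _ h _ _; apply: h. Qed.
Lemma pn1 : ~ p 1. Proof. by case: hp => _ []. Qed.
Lemma pN x : p x -> p (- x).
Proof. by move=> px; rewrite -mulN1r; apply: pM => //; have := OZ_int z (-1); rewrite ?mulrN1z ?rmorphN1. Qed.
Lemma p_sum I (r : seq I) (P : pred I) F : (forall i, P i -> p (F i)) -> p (\sum_(i <- r | P i) F i).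
Proof. move=> h; apply: (big_ind p) => //; [exact: p0 | exact: pD]. Qed.
End Ideal.

Lemma max_props (u v : algC) : 0 <= u -> 0 <= v -> u <= Num.max u v /\ v <= Num.max u v.
Proof.
move=> hu hv; have c := real_comparable (ger0_real hu) (ger0_real hv).
by have := comparable_ge_max (Num.max u v) c; rewrite lexx => /esym/andP.
Qed.

Lemma bigmax_ge0 (I : eqType) (r : seq I) (F : I -> algC) : (forall i, 0 <= F i) ->
  0 <= \big[Num.max/0]_(i <- r) F i /\ forall i, i \in r -> F i <= \big[Num.max/0]_(i <- r) F i.
Proof.
move=> h; elim: r => [|a r [IH0 IH]]; first by rewrite big_nil lexx.
rewrite big_cons; have [m1 m2] := max_props (h a) IH0; split.
  exact: le_trans (h a) m1.
move=> i; rewrite inE => /orP[/eqP -> // | ir].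
exact: le_trans (IH i ir) m2.
Qed.


Lemma key_NT n (z : 'I_n -> algC) d m (emb : 'I_m -> algC -> algC)
    (a : 'I_n -> int) (p : algC -> Prop) q (w : 'I_n -> nat) :
  (forall i, z i \in Aint) -> field_degree z d -> enumerates_embeddings z emb ->
  in_SZ z p q -> is_reduction z p q w ->
  CZ z emb * (norm1 a)%:R ^+ d < q%:R ->
  (q%:Z %| \sum_i a i * (w i)%:Z)%Z ->
  RZ z a.
Proof.
move=> Az fd hemb [hp [qpr pq _] _] red hlt hdiv.
have mled := emb_card fd hemb.
case: hemb => eE einj esurj.
have hK := KZ_sf z.
rewrite /RZ; set b := \sum_i _.
have [//|nzb] := eqVneq b 0; exfalso.
have Kb : KZ z b.
  apply: (sf_sum hK) => i _; apply: (sfM hK); [exact: (sf_int hK) | exact: KZ_z].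
have Ab : b \in Aint by apply: rpred_sum => i _; rewrite rpredM ?Aint_int.
have pb : p b.
  have -> : b = \sum_i (a i)%:~R * (z i - (w i)%:R) + (\sum_i a i * (w i)%:Z)%:~R.
    rewrite /b (big_morph (fun x : int => x%:~R : algC) (@intrD _) (mulr0z 1)) -big_split /=.
    by apply: eq_bigr => i _; rewrite intrM mulrBr subrK.
  apply: (pD hp).
    apply: (p_sum hp) => i _; apply: (pM hp); [exact: OZ_int | by case: (red i)].
  case/dvdzP: hdiv => k ->; rewrite intrM; apply: (pM hp); first exact: OZ_int.
  exact: pq.
pose N := \prod_j emb j b.
have Nrat : N \in Crat.
  apply: aut_fixed_rat => nu.
  have /fin_all_exists[pi hpi] : forall j, exists k, forall x, KZ z x -> nu (emb j x) = emb k x.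
    move=> j; apply: esurj; split; first by rewrite (e1 (eE j)) rmorph1.
    by move=> x y Kx Ky; rewrite (eD (eE j)) // (eM (eE j)) // rmorphD rmorphM.
  have inj : injective pi.
    move=> j k hjk; apply: einj => x Kx; apply: (fmorph_inj nu).
    by rewrite !hpi // hjk.
  rewrite /N rmorph_prod; under eq_bigr => j _ do rewrite hpi //.
  by rewrite [RHS](reindex_inj inj).
have NA : N \in Aint by apply: rpred_prod => j _; apply: (emb_Aint (eE j)).
have /intrP[k Dk] : N \is a Num.int by apply: Cint_rat_Aint.
have nzN : N != 0 by apply/prodf_neq0 => j _; apply: (e_neq0 (eE j)).
have [j0 hj0] : exists j0, forall x, KZ z x -> x = emb j0 x.
  by apply: esurj; split => // x y _ _.
pose c := \prod_(j | j != j0) emb j b.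
have DN : N = c * b by rewrite /N (bigD1 j0) //= -hj0 // mulrC.
have pN : p N.
  rewrite DN; apply: (pM hp) => //; split; last first.
    by apply: rpred_prod => j _; apply: (emb_Aint (eE j)).
  have -> : c = N * b^-1 by rewrite DN mulfK.
  apply: (sfM hK) => //; last exact: (sfV hK).
  by case/CratP: Nrat => r ->; apply: (sf_rat hK).
have qk : (q %| `|k|)%N.
  case: (boolP (q %| `|k|)%N) => // ndv; exfalso.
  have : coprimez k q by rewrite coprimezE /= coprime_sym prime_coprime.
  case/coprimezP => [[u v] /= huv].
  apply: (pn1 hp); have -> : (1 : algC) = (u * k + v * q%:Z)%:~R by rewrite huv.
  rewrite intrD !intrM.
  apply: (pD hp); apply: (pM hp); try exact: OZ_int.
    by rewrite -Dk.
  exact: pq.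
have k0 : k != 0 by apply: contra_neq nzN; rewrite Dk => ->.
have qlek : (q <= `|k|)%N by apply: dvdn_leq => //; rewrite absz_gt0.
have hq : q%:R <= `|N| by rewrite Dk -intr_norm -natr_absz ler_nat.
suff hN : `|N| <= CZ z emb * (norm1 a)%:R ^+ d.
  by have := le_lt_trans (le_trans hq hN) hlt; rewrite ltxx.
pose M j := \big[Num.max/0]_(i < n) `|emb j (z i)|.
have hM j : 0 <= M j /\ forall i, `|emb j (z i)| <= M j.
  have [h1 h2] := @bigmax_ge0 _ (index_enum 'I_n) (fun i : 'I_n => (`|emb j (z i)| : algC)) (fun i => normr_ge0 (emb j (z i))).
  by split => // i; apply: h2; rewrite mem_index_enum.
have bnd j : `|emb j b| <= (norm1 a)%:R * M j.
  rewrite /b (e_sum (eE j)) => [|i]; last first.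
    apply: (sfM hK); [exact: (sf_int hK) | exact: KZ_z].
  apply: le_trans (ler_norm_sum _ _ _) _.
  rewrite /norm1 natr_sum mulr_suml; apply: ler_sum => i _.
  rewrite (eM (eE j)) ?(e_int (eE j)); [| exact: (sf_int hK) | exact: KZ_z].
  by rewrite normrM -intr_norm -natr_absz ler_wpM2l // (hM j).2.
rewrite normr_prod.
apply: (@le_trans _ _ (\prod_j ((norm1 a)%:R * M j))).
  by apply: ler_prod => j _; rewrite normr_ge0 bnd.
rewrite big_split /= prodr_const card_ord mulrC.
have CZ0 : 0 <= CZ z emb by apply: prodr_ge0 => j _; exact: (hM j).1.
rewrite /CZ -/M; apply: ler_wpM2l; first by rewrite -/(CZ z emb).
have a0 : (0 < norm1 a)%N.
  rewrite lt0n; apply: contra_neq nzb => h0; rewrite /b big1 // => i _.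
  have : (`|a i| <= norm1 a)%N by rewrite /norm1 (bigD1 i) //= leq_addr.
  by rewrite h0 leqn0 absz_eq0 => /eqP ->; rewrite mul0r.
by rewrite -!natrX ler_nat leq_pexp2l.
Qed.

End NTm.

Module CXm.
Set Implicit Arguments.
Unset Strict Implicit.
Unset Printing Implicit Defensive.
Section CX1s.
Local Open Scope complex_scope.

Section E.
Variable R : realType.
Local Notation e := (@expi2pi R).

Lemma e0 : e 0 = 1.
Proof. by rewrite /expi2pi mulr0 cos0 sin0. Qed.

Lemma eD x y : e (x + y) = e x * e y.
Proof.
rewrite /expi2pi mulrDr cosD sinD [RHS]/GRing.mul /=.
by congr (Complex _ _); rewrite addrC.
Qed.

Lemma eN x : e (- x) * e x = 1.
Proof. by rewrite -eD addNr e0. Qed.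

Lemma e_neq0 x : e x != 0.
Proof. by apply/eqP => h; have := eN x; rewrite h mulr0 => /eqP; rewrite eq_sym oner_eq0. Qed.

Lemma eV x : (e x)^-1 = e (- x).
Proof. by apply: (mulIf (e_neq0 x)); rewrite mulVf ?e_neq0 // eN. Qed.

Lemma e1 : e 1 = 1.
Proof. by rewrite /expi2pi mulr1 mulr_natl cos2pi sin2pi. Qed.

Lemma e_nat n : e n%:R = 1.
Proof. elim: n => [|n IH]; first exact: e0. by rewrite -addn1 natrD eD IH e1 mulr1. Qed.

Lemma e_int (k : int) : e k%:~R = 1.
Proof.
case: k => n; first exact: e_nat.
by rewrite NegzE mulrNz -eV e_nat invr1.
Qed.

Lemma eXn x n : e x ^+ n = e (x *+ n).
Proof. elim: n => [|n IH]; first by rewrite expr0 mulr0n e0. by rewrite exprS IH -eD mulrS. Qed.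

Lemma eXz x (k : int) : e x ^ k = e (x * k%:~R).
Proof.
case: k => n; first by rewrite -exprnP eXn mulr_natr.
by rewrite NegzE -invr_expz -exprnP eXn eV mulrNz mulrN -pmulrn mulr_natr.
Qed.

Lemma e_frac x : e (fracR x) = e x.
Proof. by rewrite /fracR eD -mulrNz e_int mulr1. Qed.

End E.

Section E2.
Variable R : realType.
Local Notation e := (@expi2pi R).

Lemma e_ne1 (t : R) : 0 < t < 1 -> e t != 1.
Proof.
move=> /andP[t0 t1]; apply/eqP => h.
have hs : sin (2 * pi * t) = 0 by have := congr1 (@complex.Im R) h.
have hc : cos (2 * pi * t) = 1 by have := congr1 (@complex.Re R) h.
have pi0 := @pi_gt0 R.
case: (ltrgtP t (1/2)) => ht.
- have : 0 < sin (2 * pi * t) by apply: sin_gt0_pi; apply/andP; split; nra.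
  by rewrite hs ltxx.
- have : 0 < sin (2 * pi * t - pi) by apply: sin_gt0_pi; apply/andP; split; nra.
  have := sinDpi (2 * pi * t - pi); rewrite subrK hs => /eqP.
  rewrite eq_sym oppr_eq0 => /eqP ->; by rewrite ltxx.
- have : 2 * pi * t = pi by rewrite ht; field.
  by move=> h2; move: hc; rewrite h2 cospi => hc; lra.
Qed.

Lemma e_surj (u : R[i]) : `|u| = 1 -> exists t, 0 <= t < 1 /\ e t = u.
Proof.
case: u => a b; rewrite normc_def /= => /(congr1 (@complex.Re R)) /= h1.
have hab : a ^+ 2 + b ^+ 2 = 1.
  by rewrite -[LHS]sqr_sqrtr ?h1 ?expr1n // addr_ge0 // sqr_ge0.
have ha : -1 <= a <= 1 by apply/andP; split; nra.
have pi0 := @pi_gt0 R.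
have ac0 := acos_ge0 ha; have acpi := acos_lepi ha.
have cK : cos (acos a) = a by apply: acosK; rewrite in_itv /=.
have sK : sin (acos a) = `|b|.
  by rewrite sin_acos // -sqrtr_sqr; congr Num.sqrt; lra.
pose t0 := acos a / (2 * pi).
have ht0 : 2 * pi * t0 = acos a by rewrite /t0; field; apply/eqP; lra.
have t00 : 0 <= t0 by rewrite /t0 divr_ge0 //; lra.
have t01 : t0 <= 1/2.
  by rewrite /t0 ler_pdivrMr; [lra | lra].
have [b0|b0] := leP 0 b.
  exists t0; split; first by apply/andP; split => //; lra.
  by rewrite /expi2pi ht0 cK sK ger0_norm.
have a1 : a < 1 by nra.
have ac1 : 0 < acos a by apply: acos_gt0; apply/andP; split => //; case/andP: ha.
have t0p : 0 < t0 by rewrite /t0 divr_gt0 //; lra.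
exists (1 - t0); split; first by apply/andP; split; lra.
have h2 : 2 * pi * (1 - t0) = pi *+ 2 - acos a by rewrite mulrBr ht0 mulr1 mulr_natl.
rewrite /expi2pi h2 cosB sinB cos2pi sin2pi cK sK ltr0_norm //.
by congr (Complex _ _); ring.
Qed.

Lemma root_sum (q : nat) (K : int) : (0 < q)%N -> ~~ (q%:Z %| K)%Z ->
  \sum_(b < q) e (K%:~R / q%:R) ^+ b = 0.
Proof.
move=> q0 ndv; set z := e _.
have q0R : (q%:R : R) != 0 by rewrite pnatr_eq0 -lt0n.
have zq : z ^+ q = 1.
  have h : K%:~R / q%:R * q%:R = (K%:~R : R) by rewrite mulfVK.
  by rewrite mulr_natr in h; rewrite /z eXn h e_int.
have nz1 : z != 1.
  set r := (K %% q)%Z.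
  have -> : z = e (r%:~R / q%:R).
    rewrite /z {1}(divz_eq K q) intrD intrM mulrDl mulfK // eD e_int mul1r.
    done.
  have r0 : 0 <= r by apply: modz_ge0; rewrite eqz_nat -lt0n.
  have rq : r < q by apply: ltz_pmod; rewrite ltz_nat.
  have rn0 : r != 0 by apply: contraNneq ndv => h; apply/dvdz_mod0P.
  apply: e_ne1; apply/andP; split.
    by rewrite divr_gt0 ?ltr0n // ltr0z lt_neqAle eq_sym rn0.
  rewrite ltr_pdivrMr ?ltr0n // mul1r.
  by rewrite pmulrn ltr_int.
have := subrX1 z q; rewrite zq subrr => /esym/eqP; rewrite mulf_eq0 subr_eq0 (negbTE nz1) /=.
by move/eqP.
Qed.
End E2.

End CX1s.

Section M.
Variable R : realType.
Local Notation e := (@expi2pi R).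

Lemma e_sum I (r : seq I) (P : pred I) (F : I -> R) :
  e (\sum_(i <- r | P i) F i) = \prod_(i <- r | P i) e (F i).
Proof. exact: (big_morph e (@eD R) (e0 R)). Qed.

Lemma fracR_meas : measurable_fun [set: R] (@fracR R).
Proof.
apply: measurable_funB => //.
apply: nondecreasing_measurable => // x y xy.
by rewrite ler_int; apply: le_floor.
Qed.

Lemma shift_meas n (phi : n.-tuple R) : measurable_fun [set: n.-tuple R] (Defs.shift phi).
Proof.
apply/measurable_fun_tnthP => i.
have -> : (@tnth n R ^~ i) \o Defs.shift phi = (@fracR R) \o (fun x => x + tnth phi i) \o (@tnth n R ^~ i).
  by apply/funext => t /=; rewrite /Defs.shift tnth_mktuple.
apply: measurableT_comp; last exact: measurable_tnth.
apply: measurableT_comp; first exact: fracR_meas.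
by apply: measurable_funD.
Qed.

Lemma bnd_intM n (lam : probability (n.-tuple R) R) (G : n.-tuple R -> R) (M : R) :
  measurable_fun setT G -> (forall t, `|G t| <= M) ->
  lam.-integrable setT (EFin \o G).
Proof.
move=> mG bG; apply: measurable_bounded_integrable => //.
  by have := probability_setT lam; rewrite /= => ->; rewrite ltry.
exists M; split; first exact: num_real.
move=> M' M1 t _ /=; exact: le_trans (bG t) (ltW M1).
Qed.

Lemma bnd_int n (lam : probability (n.-tuple R) R) (G : n.-tuple R -> R) :
  measurable_fun setT G -> (forall t, `|G t| <= 1) ->
  lam.-integrable setT (EFin \o G).
Proof. exact: bnd_intM. Qed.

Lemma int_shift n (lam : probability (n.-tuple R) R) (phi : n.-tuple R) (G : n.-tuple R -> R) :
  measurable_fun setT G -> (forall t, `|G t| <= 1) ->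
  (forall A, measurable A -> lam (Defs.shift phi @^-1` A) = lam A) ->
  Rintegral lam setT (G \o Defs.shift phi) = Rintegral lam setT G.
Proof.
move=> mG bG hinv.
have mS := shift_meas phi.
have mGS : measurable_fun setT (G \o Defs.shift phi) by apply: measurableT_comp.
have intf : lam.-integrable (Defs.shift phi @^-1` setT) ((EFin \o G) \o Defs.shift phi).
  rewrite preimage_setT; exact: (@bnd_int n lam _ mGS (fun t => bG _)).
have mEG : measurable_fun setT (EFin \o G) by apply/measurable_EFinP.
have := integral_pushforward mS mEG intf measurableT.
rewrite preimage_setT /Rintegral => <-.
congr fine; apply: eq_measure_integral => A mA _.
exact: hinv.
Qed.
End M.


Section F.
Variable R : realType.
Local Notation e := (@expi2pi R).

Lemma eta_e n (a : 'I_n -> int) (x : 'I_n -> R) :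
  eta_char a (fun i => e (x i)) = e (\sum_i x i * (a i)%:~R).
Proof. by rewrite /eta_char e_sum; apply: eq_bigr => i _; rewrite eXz. Qed.

Lemma eta_Up n q (w : 'I_n -> nat) (a : 'I_n -> int) (b : nat) : (0 < q)%N ->
  eta_char a (Up R q w b) = e ((\sum_i a i * (w i)%:Z)%:~R / q%:R) ^+ b.
Proof.
move=> q0; rewrite /Up eta_e eXn; congr e.
rewrite (big_morph (fun x : int => x%:~R : R) (@intrD _) (mulr0z 1)) !mulr_suml -sumrMnl.
apply: eq_bigr => i _; rewrite -(mulr_natr (_ / _) b) intrM natrM -pmulrn.
ring.
Qed.

Lemma mu_zero n q (w : 'I_n -> nat) (a : 'I_n -> int) : (0 < q)%N ->
  ~~ (q%:Z %| \sum_i a i * (w i)%:Z)%Z -> mu_hat R q w a = 0.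
Proof.
move=> q0 ndv; rewrite /mu_hat.
under eq_bigr => b _ do rewrite eta_Up //.
by rewrite (@root_sum R q _ q0 ndv) mulr0.
Qed.

Lemma eta_mul n (a : 'I_n -> int) (f g : 'I_n -> R[i]) :
  (forall i, f i != 0) -> (forall i, g i != 0) ->
  eta_char a (fun i => f i * g i) = eta_char a f * eta_char a g.
Proof. by move=> hf hg; rewrite /eta_char -big_split; apply: eq_bigr => i _; rewrite exprzMl ?unitfE. Qed.
End F.

Section L.
Variable R : realType.
Local Notation e := (@expi2pi R).

Lemma lambda_zero n (z : 'I_n -> algC) (lam : probability (n.-tuple R) R) (a : 'I_n -> int) :
  is_Haar_HZ z lam -> (exists f : 'I_n -> R[i], HZ z f /\ eta_char a f != 1) -> lambda_hat lam a = 0.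
Proof.
move=> [_ hinv] [f [[fn1 hfR] hf]].
have /fin_all_exists[th hth] : forall i, exists t, 0 <= t < 1 /\ e t = f i.
  by move=> i; apply: e_surj.
pose phi : n.-tuple R := [tuple th i | i < n].
have Af : angles phi = f by apply/funext => i; rewrite /angles tnth_mktuple (hth i).2.
have cphi : cube phi by move=> i; rewrite tnth_mktuple; exact: (hth i).1.
have HZphi : HZ z (angles phi) by rewrite Af; split.
have hinv' := hinv phi cphi HZphi.
pose L (t : n.-tuple R) := \sum_i tnth t i * (a i)%:~R.
have etaA t : eta_char a (angles t) = e (L t) by rewrite /angles eta_e.
set c := eta_char a f in hf.
have Fshift t : e (L (Defs.shift phi t)) = e (L t) * c.
  rewrite -!etaA /c -Af -eta_mul; try by move=> i; apply: e_neq0.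
  congr eta_char; apply/funext => i.
  by rewrite /angles /Defs.shift tnth_mktuple e_frac eD.
pose GR t := cos (2 * pi * L t).
pose GI t := sin (2 * pi * L t).
have eG t : e (L t) = Complex (GR t) (GI t) by [].
have mL : measurable_fun setT L.
  apply: measurable_sum => i; apply: measurable_funM; first exact: measurable_tnth.
  exact: measurable_cst.
have m2L : measurable_fun setT (fun t => 2 * pi * L t).
  by apply: measurable_funM => //; exact: measurable_cst.
have mGR : measurable_fun setT GR.
  by apply: measurableT_comp m2L; apply: continuous_measurable_fun; exact: continuous_cos.
have mGI : measurable_fun setT GI.
  by apply: measurableT_comp m2L; apply: continuous_measurable_fun; exact: continuous_sin.
have bGR t : `|GR t| <= 1 by exact: cos_max.
have bGI t : `|GI t| <= 1 by exact: sin_max.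
have iGR := bnd_int lam mGR bGR.
have iGI := bnd_int lam mGI bGI.
have Dc : c = Complex (complex.Re c) (complex.Im c) by case: (c).
have GRS t : GR (Defs.shift phi t) = GR t * complex.Re c - GI t * complex.Im c.
  by have := congr1 (@complex.Re R) (Fshift t); rewrite eG eG Dc.
have GIS t : GI (Defs.shift phi t) = GR t * complex.Im c + GI t * complex.Re c.
  by have := congr1 (@complex.Im R) (Fshift t); rewrite eG eG Dc.
set IR := Rintegral lam setT GR.
set II := Rintegral lam setT GI.
have iM (G : n.-tuple R -> R) (k : R) : measurable_fun setT G -> (forall t, `|G t| <= 1) ->
    lam.-integrable setT (EFin \o (fun t => G t * k)).
  move=> mG bG; apply: (bnd_intM lam (M:=`|k|)).
    by apply: measurable_funM => //; exact: measurable_cst.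
  by move=> t; rewrite normrM ler_piMl.
have hR : IR = IR * complex.Re c - II * complex.Im c.
  transitivity (Rintegral lam setT (GR \o Defs.shift phi)).
    by rewrite (int_shift mGR bGR hinv').
  rewrite (_ : GR \o _ = fun t => GR t * complex.Re c - GI t * complex.Im c); last first.
    by apply/funext => t /=; rewrite GRS.
  by rewrite RintegralB ?RintegralZr //; apply: iM.
have hI : II = IR * complex.Im c + II * complex.Re c.
  transitivity (Rintegral lam setT (GI \o Defs.shift phi)).
    by rewrite (int_shift mGI bGI hinv').
  rewrite (_ : GI \o _ = fun t => GR t * complex.Im c + GI t * complex.Re c); last first.
    by apply/funext => t /=; rewrite GIS.
  by rewrite RintegralD ?RintegralZr //; apply: iM.
have -> : lambda_hat lam a = Complex IR II.
  rewrite /lambda_hat; congr Complex; apply: eq_Rintegral => t _; by rewrite etaA.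
have hc : Complex IR II * c = Complex IR II.
  rewrite Dc [LHS]/GRing.mul /=; congr Complex.
    by rewrite [RHS]hR.
  by rewrite [RHS]hI addrC.
apply/eqP; move/eqP: hc; rewrite -subr_eq0 -{2}[Complex IR II]mulr1 -mulrBr mulf_eq0 subr_eq0.
by rewrite (negbTE hf) orbF.
Qed.
End L.

End CXm.

Theorem lemma3p3 (R : realType) (n : nat) (z : 'I_n -> algC)
    (d m : nat) (emb : 'I_m -> algC -> algC)
    (lam : probability (n.-tuple R) R)
    (a : 'I_n -> int) (p : algC -> Prop) (q : nat) (w : 'I_n -> nat) :
  injective z ->
  (forall i, z i \in Aint) ->
  field_degree z d ->
  enumerates_embeddings z emb ->
  is_Haar_HZ z lam ->
  (exists f : 'I_n -> R[i], HZ z f /\ eta_char a f != 1) ->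
  in_SZ z p q ->
  is_reduction z p q w ->
  CZ z emb * (norm1 a)%:R ^+ d < q%:R ->
  lambda_hat lam a = 0 /\ mu_hat R q w a = 0.
Proof.
move=> zinj Az fd hemb hH hf hS hred hlt.
split; first exact: (CXm.lambda_zero hH hf).
have q0 : (0 < q)%N by case: hS => _ [qpr _ _] _; exact: prime_gt0.
apply: CXm.mu_zero => //.
apply/negP => hdiv.
have RZa := NTm.key_NT Az fd hemb hS hred hlt hdiv.
case: hf => f [[_ hfR] hne].
by move: hne; rewrite (hfR a RZa) eqxx.
Qed.
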